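(* In the setting of the memory-$\tau$ lace expansion for self-avoiding walk on $\mathbb Z^d$, the $n$-th coefficient $\alpha_n$ of the formal series expansion $\beta_\tau=\sum_{n\ge1}\alpha_n s^n$ does not depend on $\tau$ as long as $\tau\ge 2n-2$ (including $\tau=\infty$).
   Context: For $\tau\in\{1,2,\dots\}\cup\{\infty\}$, a memory-$\tau$ walk is a nearest-neighbour walk $\omega$ on $\mathbb Z^d$ with $\omega(i)\ne\omega(j)$ whenever $0<|i-j|\le\tau$. The memory-$\tau$ lace expansion (Brydges–Spencer) produces coefficients $c_{a,b}=c_{a,b}(\tau)$, $(a,b)\in I=\{b\ge1,\ b+1\le a\le 2b\}$, defined from counts of memory-$\tau$ lace graphs of length $a$; $c_{a,b}(\tau)$ is independent of $\tau$ once $\tau\ge a$. The series $\sum_n\alpha_n s^n$ is the unique formal power series solution $\beta$ of $\beta=s[1+\sum_{(a,b)\in I}c_{a,b}(\tau)\beta^a s^{b-a}]$, $s=1/(2d)$. *)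

(* Defs.v *)
From HB Require Import structures.
From mathcomp Require Import all_boot all_order all_algebra.
Set Implicit Arguments. Unset Strict Implicit. Unset Printing Implicit Defensive.
Import Order.TTheory GRing.Theory Num.Theory.

Inductive memory : Type := Fin of nat | Inf.

Definition mem_valid (t : memory) : bool :=
  match t with Fin k => 0 < k | Inf => true end.

Definition mem_ge (t : memory) (k : nat) : bool :=
  match t with Fin m => k <= m | Inf => true end.

Definition in_I (a b : nat) : bool := (1 <= b) && (b.+1 <= a <= b.*2).

Local Open Scope ring_scope.

(* Formal power series in s are represented by their coefficient sequences
   alpha : nat -> R, alpha n = [s^n] beta.  Writing beta = s * gamma with
   gamma_i = alpha_(i+1), one has beta^a s^(b-a) = s^b gamma^a.
   trunc_gamma alpha k is the polynomial gamma truncated at degree k, which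
   determines [s^j] gamma^a for all j <= k. *)
Definition trunc_gamma (R : comNzRingType) (alpha : nat -> R) (k : nat) : {poly R} :=
  \poly_(i < k.+1) alpha i.+1.

(* alpha is the coefficient sequence of a formal power series solution beta of
   beta = s [1 + sum_{(a,b) in I} c_{a,b}(tau) beta^a s^(b-a)],
   compared coefficientwise. *)
Definition is_lace_solution (R : comNzRingType)
    (c : memory -> nat -> nat -> R) (t : memory) (alpha : nat -> R) : Prop :=
  alpha 0%N = 0 /\
  forall n : nat,
    alpha n.+1 =
      (n == 0%N)%:R +
      \sum_(1 <= b < n.+1) \sum_(b.+1 <= a < (b.*2).+1)
         c t a b * ((trunc_gamma alpha n) ^+ a)`_(n - b).

(* Main.v *)
Require Import Defs.
From HB Require Import structures.
From mathcomp Require Import all_boot all_order all_algebra.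
Import GRing.Theory.
Local Open Scope ring_scope.

Lemma coef_exp_eq (R : comNzRingType) (p q : {poly R}) (J : nat) :
  (forall i, (i <= J)%N -> p`_i = q`_i) ->
  forall a i, (i <= J)%N -> (p ^+ a)`_i = (q ^+ a)`_i.
Proof.
move=> H; elim=> [|a IH] i hi; first by rewrite !expr0.
rewrite !exprS !coefM; apply: eq_bigr => k _.
have hk : (k <= J)%N by apply: leq_trans hi; rewrite -ltnS.
have hk2 : (i - k <= J)%N by apply: leq_trans hi; rewrite leq_subr.
by rewrite H // IH.
Qed.

Theorem mainTheorem3 (R : comNzRingType) (c : memory -> nat -> nat -> R)
  (hc : forall (t : memory) (a b : nat), mem_valid t -> in_I a b ->
          mem_ge t a -> c t a b = c Inf a b)
  (n : nat) (hn : (1 <= n)%N) (t : memory) (ht : mem_valid t)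
  (htn : mem_ge t (n.*2 - 2))
  (alpha alpha_inf : nat -> R)
  (hsol : is_lace_solution c t alpha)
  (hsol_inf : is_lace_solution c Inf alpha_inf) :
  alpha n = alpha_inf n.
Proof.
case: hsol => h0 hrec; case: hsol_inf => h0' hrec'.
suff: forall k, (k <= n)%N -> alpha k = alpha_inf k by apply.
elim/ltn_ind => k IH hk.
case: k IH hk => [|m] IH hk; first by rewrite h0 h0'.
rewrite hrec hrec'; congr (_ + _).
apply: eq_big_nat => b /andP [hb1 hbm].
apply: eq_big_nat => a /andP [hab ha2].
congr (_ * _).
  apply: hc => //.
    by rewrite /in_I hb1 hab -ltnS ha2.
  case: t ht htn {hrec} => [tt|] // _ htn.
  apply: (leq_trans _ htn).
  have h1 : (m.*2 <= n.*2 - 2)%N.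
    rewrite leq_subRL; first by rewrite add2n -doubleS leq_double.
    by rewrite -(leq_double 1 n) in hn.
  apply: leq_trans h1; apply: leq_trans (_ : b.*2 <= m.*2)%N.
    by rewrite -ltnS.
  by rewrite leq_double -ltnS.
apply: (@coef_exp_eq _ _ _ m.-1).
  move=> i hi; rewrite !coef_poly.
  have him : (i < m.+1)%N by apply: leq_ltn_trans hi _; rewrite ltnS leq_pred.
  have hm : (0 < m)%N by apply: leq_trans hb1 _; rewrite -ltnS.
  have him' : (i.+1 < m.+1)%N by rewrite ltnS; apply: leq_ltn_trans hi _; rewrite prednK.
  rewrite him; apply: IH => //.
  by apply: leq_trans hk; apply: ltnW.
by rewrite -subn1 leq_sub2l.
Qed.
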